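(* Let $\tau>0$ and $\alpha,\beta\in\mathbb R$. Define $\mathcal M_\tau(g)=\frac1\tau\int_0^\tau\sigma g(\sigma)\,d\sigma$, so that $\mathcal M_\tau(\mathrm e^{i\alpha\cdot})=\frac1\tau\int_0^\tau\sigma\mathrm e^{i\alpha\sigma}\,d\sigma$. Then: (i) $$\int_0^\tau\Big(\mathrm e^{is\alpha}+i\beta\,\mathrm e^{is\beta}\,\mathcal M_\tau(\mathrm e^{i\alpha\cdot})\Big)\,ds=\tau\varphi(i\tau\alpha)-\tau\big(\mathrm e^{i\tau\beta}-1\big)\psi(i\tau\alpha);$$ (ii) the function $$\mathcal R_2(\alpha,\beta,\tau):=\int_0^\tau\mathrm e^{is(\alpha+\beta)}\,ds-\int_0^\tau\Big(\mathrm e^{is\alpha}+i\beta\,\mathrm e^{is\beta}\,\mathcal M_\tau(\mathrm e^{i\alpha\cdot})\Big)\,ds$$ satisfies $|\mathcal R_2(\alpha,\beta,\tau)|\le C\tau^3|\beta|^2$ for an absolute constant $C$ independent of $\alpha,\beta,\tau$.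
   Context: $\varphi(z)=\frac{e^z-1}{z}$ for $z\neq0$, $\varphi(0)=1$; $\psi(z)=\frac{e^z-1-ze^z}{z^2}$ for $z\ne0$, $\psi(0)=-\frac12$. *)

(* Defs.v *)
From Stdlib Require Import Reals.
From Coquelicot Require Import Coquelicot.
Open Scope R_scope.

Definition cexp (z : C) : C :=
  (exp (Re z) * cos (Im z), exp (Re z) * sin (Im z)).

Definition phi (z : C) : C :=
  if Ceq_dec z 0 then RtoC 1 else ((cexp z - 1) / z)%C.

Definition psi (z : C) : C :=
  if Ceq_dec z 0 then RtoC (- / 2)
  else ((cexp z - 1 - z * cexp z) / (z * z))%C.

Definition Mtau (tau : R) (g : R -> C) : C :=
  (RtoC (/ tau) * RInt (V := C_R_CompleteNormedModule)
                        (fun sigma => (RtoC sigma * g sigma)%C) 0 tau)%C.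

Definition integrand (alpha beta tau s : R) : C :=
  (cexp (Ci * RtoC (s * alpha))
   + Ci * RtoC beta * cexp (Ci * RtoC (s * beta))
       * Mtau tau (fun sigma => cexp (Ci * RtoC (alpha * sigma))))%C.

Definition R2 (alpha beta tau : R) : C :=
  (RInt (V := C_R_CompleteNormedModule)
        (fun s => cexp (Ci * RtoC (s * (alpha + beta)))) 0 tau
   - RInt (V := C_R_CompleteNormedModule) (integrand alpha beta tau) 0 tau)%C.

(* Main.v *)
Require Import Defs.
From Stdlib Require Import Reals Lra FunctionalExtensionality.
From Coquelicot Require Import Coquelicot.
Open Scope R_scope.

Lemma cexpI x : cexp (Ci * RtoC x) = (cos x, sin x).
Proof.
  unfold cexp, Ci, RtoC, Cmult; simpl.
  replace (0 * x - 1 * 0) with 0 by ring.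
  replace (0 * 0 + 1 * x) with x by ring.
  rewrite exp_0; f_equal; ring.
Qed.

Lemma RInt_pair (f : R -> C) a b l1 l2 :
  is_RInt (fun t => fst (f t)) a b l1 -> is_RInt (fun t => snd (f t)) a b l2 ->
  is_RInt (V := C_R_CompleteNormedModule) f a b (l1, l2).
Proof.
  intros H1 H2.
  exact (is_RInt_fct_extend_pair (U:=R_NormedModule) (V:=R_NormedModule) f a b l1 l2 H1 H2).
Qed.
Lemma RInt_fst (f : R -> C) a b l :
  is_RInt (V := C_R_CompleteNormedModule) f a b l -> is_RInt (fun t => fst (f t)) a b (fst l).
Proof. intros H. exact (is_RInt_fct_extend_fst (U:=R_NormedModule) (V:=R_NormedModule) f a b l H). Qed.
Lemma RInt_snd (f : R -> C) a b l :
  is_RInt (V := C_R_CompleteNormedModule) f a b l -> is_RInt (fun t => snd (f t)) a b (snd l).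
Proof. intros H. exact (is_RInt_fct_extend_snd (U:=R_NormedModule) (V:=R_NormedModule) f a b l H). Qed.

Lemma RInt_Cmul (g : R -> C) a b (L c : C) :
  is_RInt (V := C_R_CompleteNormedModule) g a b L ->
  is_RInt (V := C_R_CompleteNormedModule) (fun s => (c * g s)%C) a b (c * L)%C.
Proof.
intros H. destruct c as [cr ci]. destruct L as [lr li].
  pose proof (RInt_fst _ _ _ _ H) as H1. pose proof (RInt_snd _ _ _ _ H) as H2.
  cbn [fst snd] in H1, H2.
  change ((cr, ci) * (lr, li))%C with (cr * lr - ci * li, cr * li + ci * lr).
  apply (RInt_pair (fun s => ((cr,ci) * g s)%C)).
  - apply (is_RInt_ext (fun t => cr * fst (g t) - ci * snd (g t))).
    { intros. unfold Cmult. cbn [fst snd]. reflexivity. }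
    exact (is_RInt_minus (V:=R_NormedModule) _ _ _ _ _ _
             (is_RInt_scal (V:=R_NormedModule) _ _ _ cr _ H1)
             (is_RInt_scal (V:=R_NormedModule) _ _ _ ci _ H2)).
  - apply (is_RInt_ext (fun t => cr * snd (g t) + ci * fst (g t))).
    { intros. unfold Cmult. cbn [fst snd]. reflexivity. }
    exact (is_RInt_plus (V:=R_NormedModule) _ _ _ _ _ _
             (is_RInt_scal (V:=R_NormedModule) _ _ _ cr _ H2)
             (is_RInt_scal (V:=R_NormedModule) _ _ _ ci _ H1)).
Qed.

Lemma FTC (f df : R -> R) a b l : (forall x, is_derive f x (df x)) ->
  (forall x, continuous df x) -> l = f b - f a -> is_RInt df a b l.
Proof. intros H1 H2 ->. apply (is_RInt_derive f df); auto. Qed.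

Lemma I_cos a t : a <> 0 -> is_RInt (fun s => cos (s * a)) 0 t (sin (t * a) / a).
Proof.
  intros Ha. apply (FTC (fun s => sin (s * a) / a)).
  - intros x. auto_derive; auto. field; auto.
  - intros x. apply (ex_derive_continuous (K:=R_AbsRing) (V:=R_NormedModule)). auto_derive; auto.
  - rewrite ?Rmult_0_l, ?Rmult_0_r, ?cos_0, ?sin_0. field; auto.
Qed.
Lemma I_sin a t : a <> 0 -> is_RInt (fun s => sin (s * a)) 0 t ((1 - cos (t * a)) / a).
Proof.
  intros Ha. apply (FTC (fun s => - cos (s * a) / a)).
  - intros x. auto_derive; auto. field; auto.
  - intros x. apply (ex_derive_continuous (K:=R_AbsRing) (V:=R_NormedModule)). auto_derive; auto.
  - rewrite ?Rmult_0_l, ?Rmult_0_r, ?cos_0, ?sin_0. field; auto.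
Qed.
Lemma I_scos a t : a <> 0 -> is_RInt (fun s => s * cos (s * a)) 0 t
   (t * sin (t * a) / a + cos (t * a) / (a * a) - 1 / (a * a)).
Proof.
  intros Ha. apply (FTC (fun s => s * sin (s * a) / a + cos (s * a) / (a * a))).
  - intros x. auto_derive; auto. field; auto.
  - intros x. apply (ex_derive_continuous (K:=R_AbsRing) (V:=R_NormedModule)). auto_derive; auto.
  - rewrite ?Rmult_0_l, ?Rmult_0_r, ?cos_0, ?sin_0. field; auto.
Qed.
Lemma I_ssin a t : a <> 0 -> is_RInt (fun s => s * sin (s * a)) 0 t
   (- t * cos (t * a) / a + sin (t * a) / (a * a)).
Proof.
  intros Ha. apply (FTC (fun s => - s * cos (s * a) / a + sin (s * a) / (a * a))).
  - intros x. auto_derive; auto. field; auto.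
  - intros x. apply (ex_derive_continuous (K:=R_AbsRing) (V:=R_NormedModule)). auto_derive; auto.
  - rewrite ?Rmult_0_l, ?Rmult_0_r, ?cos_0, ?sin_0. field; auto.
Qed.
Lemma I_lin (c : R) t : is_RInt (fun s => c * s) 0 t (c * (t * t) / 2).
Proof.
  apply (FTC (fun s => c * (s * s) / 2)).
  - intros x. auto_derive; auto. field.
  - intros x. apply (ex_derive_continuous (K:=R_AbsRing) (V:=R_NormedModule)). auto_derive; auto.
  - field.
Qed.
Lemma I_sq (c : R) t : is_RInt (fun s => c * (s * s)) 0 t (c * (t * t * t) / 3).
Proof.
  apply (FTC (fun s => c * (s * s * s) / 3)).
  - intros x. auto_derive; auto. field.
  - intros x. apply (ex_derive_continuous (K:=R_AbsRing) (V:=R_NormedModule)). auto_derive; auto.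
  - field.
Qed.
Lemma sin_pos_bd x : 0 <= x -> Rabs (sin x - x) <= x ^ 2.
Proof.
  intros Hx. destruct (Rle_dec x 2) as [H2|H2].
  - destruct (pre_sin_bound x 0 Hx ltac:(lra)) as [L U].
    unfold sin_approx, sin_term in L, U. simpl sum_f_R0 in L, U.
    simpl Factorial.fact in L, U. simpl INR in L, U.
    assert (L' : x - x^3/6 <= sin x) by (eapply Rle_trans; [|exact L]; right; field).
    assert (U' : sin x <= x - x^3/6 + x^5/120) by (eapply Rle_trans; [exact U|]; right; field).
    assert (h1 : 0 <= x ^ 3 * (20 - x ^ 2)).
    { apply Rmult_le_pos. apply pow_le; lra. nra. }
    assert (h2 : x ^ 3 <= 2 * x ^ 2).
    { replace (x ^ 3) with (x * x ^ 2) by ring. apply Rmult_le_compat_r. apply pow2_ge_0. lra. }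
    apply Rabs_le. split; nra.
  - pose proof (SIN_bound x). apply Rabs_le. split; nra.
Qed.
Lemma sin_bd x : Rabs (sin x - x) <= x ^ 2.
Proof.
  destruct (Rle_dec 0 x). apply sin_pos_bd; auto.
  pose proof (sin_pos_bd (- x) ltac:(lra)). rewrite sin_neg in H.
  replace (- sin x - - x) with (- (sin x - x)) in H by ring. rewrite Rabs_Ropp in H.
  replace ((- x) ^ 2) with (x ^ 2) in H by ring. exact H.
Qed.
Lemma cos_bd x : Rabs (cos x - 1) <= x ^ 2.
Proof.
  pose proof (COS_bound x).
  destruct (Rle_dec (x ^ 2) 2) as [H2|H2].
  - assert (-2 <= x) by nra. assert (x <= 2) by nra.
    destruct (pre_cos_bound x 0 ltac:(lra) ltac:(lra)) as [L U].
    unfold cos_approx, cos_term in L. simpl sum_f_R0 in L.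
    simpl Factorial.fact in L. simpl INR in L.
    assert (L' : 1 - x^2/2 <= cos x) by (eapply Rle_trans; [|exact L]; right; field).
    apply Rabs_le. split; nra.
  - apply Rabs_le. split; lra.
Qed.

Lemma zI_ne a t : 0 < t -> a <> 0 -> (Ci * RtoC (t * a) <> 0)%C.
Proof.
  intros Ht Ha e. apply (f_equal snd) in e. unfold Cmult, Ci, RtoC in e. simpl in e.
  assert (t * a <> 0) by (apply Rmult_integral_contrapositive; split; lra). lra.
Qed.
Lemma zI_0 t : (Ci * RtoC (t * 0) = 0)%C.
Proof. unfold Cmult, Ci, RtoC. simpl. f_equal; ring. Qed.

Lemma LemA a t : 0 < t ->
  is_RInt (V := C_R_CompleteNormedModule) (fun s => cexp (Ci * RtoC (s * a))%C) 0 t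
    (RtoC t * phi (Ci * RtoC (t * a)))%C.
Proof.
  intros Ht.
  rewrite (functional_extensionality (fun s => cexp (Ci * RtoC (s * a))%C) (fun s => (cos (s * a), sin (s * a))))
    by (intros; apply cexpI).
  destruct (Req_dec a 0) as [Ha|Ha].
  - subst a. unfold phi. rewrite zI_0. destruct (Ceq_dec 0 0) as [_|n]; [|congruence].
    replace (RtoC t * RtoC 1)%C with (t, 0) by (unfold RtoC, Cmult; simpl; f_equal; ring).
    apply RInt_pair; simpl.
    + apply (FTC (fun s => s)).
      * intros x. auto_derive; auto. rewrite Rmult_0_r, cos_0; ring.
      * intros x. apply (ex_derive_continuous (K:=R_AbsRing) (V:=R_NormedModule)). auto_derive; auto.
      * ring.
    + apply (FTC (fun s => 0)).
      * intros x. auto_derive; auto. rewrite Rmult_0_r, sin_0; ring.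
      * intros x. apply (ex_derive_continuous (K:=R_AbsRing) (V:=R_NormedModule)). auto_derive; auto.
      * ring.
  - unfold phi. destruct (Ceq_dec _ 0) as [e|_]; [exfalso; exact (zI_ne a t Ht Ha e)|].
    replace (RtoC t * ((cexp (Ci * RtoC (t * a)) - 1) / (Ci * RtoC (t * a))))%C
      with (sin (t * a) / a, (1 - cos (t * a)) / a).
    + apply RInt_pair; simpl; [apply I_cos | apply I_sin]; auto.
    + rewrite cexpI. unfold Cdiv, Cinv, Cminus, Cplus, Copp, Cmult, Ci, RtoC; simpl.
      f_equal; field; split; lra.
Qed.

Lemma LemB a t : 0 < t ->
  is_RInt (V := C_R_CompleteNormedModule)
    (fun sigma => (RtoC sigma * cexp (Ci * RtoC (a * sigma)))%C) 0 t
    (RtoC (- (t * t)) * psi (Ci * RtoC (t * a)))%C.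
Proof.
  intros Ht.
  rewrite (functional_extensionality (fun sigma => (RtoC sigma * cexp (Ci * RtoC (a * sigma)))%C)
            (fun s => (s * cos (s * a), s * sin (s * a)))).
  2:{ intros s. rewrite cexpI. unfold RtoC, Cmult; simpl. rewrite (Rmult_comm a s). f_equal; ring. }
  destruct (Req_dec a 0) as [Ha|Ha].
  - subst a. unfold psi. rewrite zI_0. destruct (Ceq_dec 0 0) as [_|n]; [|congruence].
    replace (RtoC (- (t * t)) * RtoC (- / 2))%C with (t * t / 2, 0) by (unfold RtoC, Cmult; simpl; f_equal; field).
    apply RInt_pair; simpl.
    + apply (FTC (fun s => s * s / 2)).
      * intros x. auto_derive; auto. rewrite Rmult_0_r, cos_0; field.
      * intros x. apply (ex_derive_continuous (K:=R_AbsRing) (V:=R_NormedModule)). auto_derive; auto.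
      * field.
    + apply (FTC (fun s => 0)).
      * intros x. auto_derive; auto. rewrite Rmult_0_r, sin_0; ring.
      * intros x. apply (ex_derive_continuous (K:=R_AbsRing) (V:=R_NormedModule)). auto_derive; auto.
      * ring.
  - unfold psi. destruct (Ceq_dec _ 0) as [e|_]; [exfalso; exact (zI_ne a t Ht Ha e)|].
    replace (RtoC (- (t * t)) * ((cexp (Ci * RtoC (t * a)) - 1 - Ci * RtoC (t * a) * cexp (Ci * RtoC (t * a)))
         / (Ci * RtoC (t * a) * (Ci * RtoC (t * a)))))%C
      with (t * sin (t * a) / a + cos (t * a) / (a * a) - 1 / (a * a),
            - t * cos (t * a) / a + sin (t * a) / (a * a)).
    + apply RInt_pair; simpl; [apply I_scos | apply I_ssin]; auto.
    + rewrite cexpI. unfold Cdiv, Cinv, Cminus, Cplus, Copp, Cmult, Ci, RtoC; simpl.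
      f_equal; field; split; lra.
Qed.

Lemma LemM a t : 0 < t ->
  Mtau t (fun sigma => cexp (Ci * RtoC (a * sigma)))%C = (- RtoC t * psi (Ci * RtoC (t * a)))%C.
Proof.
  intros Ht. unfold Mtau. rewrite (is_RInt_unique _ _ _ _ (LemB a t Ht)).
  assert (RtoC t <> 0%C) by (intros e; apply (f_equal fst) in e; simpl in e; lra).
  rewrite RtoC_inv, RtoC_opp, RtoC_mult. field. all: first [exact H | lra].
Qed.

Lemma L4 b t : 0 < t ->
  (Ci * RtoC b * (RtoC t * phi (Ci * RtoC (t * b))))%C = (cexp (Ci * RtoC (t * b)) - 1)%C.
Proof.
  intros Ht. destruct (Req_dec b 0) as [Hb|Hb].
  - subst b. rewrite cexpI. unfold phi. rewrite zI_0. destruct (Ceq_dec 0 0) as [_|n]; [|congruence].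
    rewrite Rmult_0_r, cos_0, sin_0. unfold Cmult, Cminus, Cplus, Copp, Ci, RtoC; simpl. f_equal; ring.
  - unfold phi. destruct (Ceq_dec _ 0) as [e|n]; [exfalso; exact (zI_ne b t Ht Hb e)|].
    rewrite RtoC_mult in n |- *. field. split; [|split].
    + intros e; apply (f_equal fst) in e; simpl in e; lra.
    + intros e; apply (f_equal fst) in e; simpl in e; lra.
    + intros e; apply (f_equal snd) in e; simpl in e; lra.
Qed.

Lemma plusC (x y : C) : @plus (NormedModule.AbelianMonoid R_AbsRing C_R_NormedModule) x y = (x + y)%C.
Proof. reflexivity. Qed.
Lemma minusC (x y : C) : @minus (NormedModule.AbelianGroup R_AbsRing C_R_NormedModule) x y = (x - y)%C.
Proof. reflexivity. Qed.

Lemma Int_integrand a b t : 0 < t ->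
  is_RInt (V:=C_R_CompleteNormedModule) (integrand a b t) 0 t
   (RtoC t * phi (Ci * RtoC (t * a)) + (cexp (Ci * RtoC (t * b)) - 1)
      * Mtau t (fun sigma => cexp (Ci * RtoC (a * sigma))))%C.
Proof.
  intros Ht. set (M := Mtau t (fun sigma => cexp (Ci * RtoC (a * sigma)))%C).
  rewrite <- (L4 b t Ht).
  apply (is_RInt_ext (fun s => plus (cexp (Ci * RtoC (s * a)))%C ((Ci * RtoC b * M) * cexp (Ci * RtoC (s * b)))%C)).
  { intros x _. match goal with |- @plus ?G ?u ?v = _ => change (@plus G u v) with (Cplus u v) end. unfold integrand. fold M. match goal with |- @eq _ ?u ?v => change (@eq C u v) end. ring. }
  replace (RtoC t * phi (Ci * RtoC (t * a)) + Ci * RtoC b * (RtoC t * phi (Ci * RtoC (t * b))) * M)%C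
    with (plus (RtoC t * phi (Ci * RtoC (t * a)))%C ((Ci * RtoC b * M) * (RtoC t * phi (Ci * RtoC (t * b))))%C)
    by (match goal with |- @eq _ (@plus ?G ?p ?q) ?u => change (@eq C (Cplus p q) u) end; ring).
  apply (is_RInt_plus (V:=C_R_NormedModule)).
  - apply LemA; auto.
  - apply RInt_Cmul. apply LemA; auto.
Qed.

Lemma part1 : forall tau alpha beta : R, 0 < tau ->
     RInt (V := C_R_CompleteNormedModule) (integrand alpha beta tau) 0 tau
     = (RtoC tau * phi (Ci * RtoC (tau * alpha))
        - RtoC tau * (cexp (Ci * RtoC (tau * beta)) - 1)
            * psi (Ci * RtoC (tau * alpha)))%C.
Proof.
  intros t a b Ht. rewrite (is_RInt_unique _ _ _ _ (Int_integrand a b t Ht)).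
  rewrite LemM by auto. match goal with |- @eq _ ?u ?v => change (@eq C u v) end. ring.
Qed.

Lemma sqrt2_le2 : sqrt 2 <= 2.
Proof.
  rewrite <- (sqrt_square 2) at 2 by lra. apply sqrt_le_1_alt. lra.
Qed.

Lemma eb x : Cmod ((cos x, sin x) - 1 - Ci * RtoC x)%C <= 2 * x ^ 2.
Proof.
  replace ((cos x, sin x) - 1 - Ci * RtoC x)%C with (cos x - 1, sin x - x)
    by (unfold Cminus, Cplus, Copp, Cmult, Ci, RtoC; simpl; f_equal; ring).
  eapply Rle_trans; [apply Cmod_2Rmax|]. simpl.
  pose proof (cos_bd x). pose proof (sin_bd x). pose proof sqrt2_le2.
  assert (Rmax (Rabs (cos x - 1)) (Rabs (sin x - x)) <= x ^ 2) by (apply Rmax_lub; auto).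
  assert (0 <= Rmax (Rabs (cos x - 1)) (Rabs (sin x - x))).
  { eapply Rle_trans; [apply Rabs_pos|apply Rmax_l]. }
  assert (0 <= sqrt 2) by apply sqrt_pos.
  apply Rle_trans with (2 * Rmax (Rabs (cos x - 1)) (Rabs (sin x - x))).
  - apply Rmult_le_compat_r; auto.
  - lra.
Qed.

Lemma Cmod_E x : Cmod (cos x, sin x) = 1.
Proof.
  unfold Cmod; simpl. replace (cos x * (cos x * 1) + sin x * (sin x * 1)) with 1. apply sqrt_1.
  pose proof (sin2_cos2 x) as E. unfold Rsqr in E. lra.
Qed.

Lemma f_factor a b s :
  (cexp (Ci * RtoC (s * (a + b))) - cexp (Ci * RtoC (s * a)) - Ci * RtoC b * (RtoC s * cexp (Ci * RtoC (a * s))))%C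
  = ((cos (s * a), sin (s * a)) * ((cos (s * b), sin (s * b)) - 1 - Ci * RtoC (s * b)))%C.
Proof.
  rewrite !cexpI. rewrite Rmult_plus_distr_l, cos_plus, sin_plus, (Rmult_comm a s).
  unfold Cminus, Cplus, Copp, Cmult, Ci, RtoC; simpl. f_equal; ring.
Qed.

Lemma part2 : exists C0 : R, forall tau alpha beta : R, 0 < tau ->
     Cmod (R2 alpha beta tau) <= C0 * tau ^ 3 * Rabs beta ^ 2.
Proof.
  exists 2. intros t a b Ht.
  pose proof (LemB a t Ht) as HK.
  set (VK := (RtoC (- (t * t)) * psi (Ci * RtoC (t * a)))%C) in HK.
  assert (HM : Mtau t (fun sigma => cexp (Ci * RtoC (a * sigma)))%C = (RtoC (/ t) * VK)%C).
  { unfold Mtau. rewrite (is_RInt_unique _ _ _ _ HK). reflexivity. }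
  pose proof (LemA a t Ht) as HA.
  set (VA := (RtoC t * phi (Ci * RtoC (t * a)))%C) in HA.
  pose proof (LemA (a + b) t Ht) as HAB.
  set (VAB := (RtoC t * phi (Ci * RtoC (t * (a + b))))%C) in HAB.
  set (E := cexp (Ci * RtoC (t * b))).
  assert (Hint : RInt (V := C_R_CompleteNormedModule) (integrand a b t) 0 t = (VA + (E - 1) * (RtoC (/ t) * VK))%C).
  { rewrite (is_RInt_unique _ _ _ _ (Int_integrand a b t Ht)). rewrite HM. reflexivity. }
  assert (Hf : is_RInt (V := C_R_CompleteNormedModule)
     (fun s => ((cos (s * a), sin (s * a)) * ((cos (s * b), sin (s * b)) - 1 - Ci * RtoC (s * b)))%C) 0 t
     (VAB - VA - Ci * RtoC b * VK)%C).
  { pose proof (is_RInt_minus (V:=C_R_NormedModule) _ _ 0 t _ _ HAB HA) as H1.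
    pose proof (RInt_Cmul _ 0 t VK (Ci * RtoC b)%C HK) as H2.
    pose proof (is_RInt_minus (V:=C_R_NormedModule) _ _ 0 t _ _ H1 H2) as H3.
    refine (is_RInt_ext _ _ 0 t _ _ H3).
    intros x _. rewrite <- f_factor. reflexivity. }
  assert (Ht0 : RtoC t <> 0%C) by (intros e; apply (f_equal fst) in e; simpl in e; lra).
  assert (HR : R2 a b t = ((VAB - VA - Ci * RtoC b * VK) + (Ci * RtoC b * RtoC t - (E - 1)) * (RtoC (/ t) * VK))%C).
  { unfold R2. rewrite (is_RInt_unique _ _ _ _ HAB), Hint.
    match goal with |- @eq _ ?u ?v => change (@eq C u v) end.
    rewrite RtoC_inv by lra. field. exact Ht0. }
  assert (B1 : Cmod (VAB - VA - Ci * RtoC b * VK)%C <= 2 * b ^ 2 * (t * t * t) / 3).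
  { rewrite Cmod_norm.
    refine (norm_RInt_le (V:=C_R_NormedModule) _ (fun s => (2 * b ^ 2) * (s * s)) 0 t _ _ (Rlt_le _ _ Ht) _ Hf (I_sq _ _)).
    intros x Hx. rewrite <- Cmod_norm. rewrite Cmod_mult, Cmod_E.
    pose proof (eb (x * b)). nra. }
  assert (B2 : Cmod (Ci * RtoC b * RtoC t - (E - 1))%C <= 2 * (t * b) ^ 2).
  { replace (Ci * RtoC b * RtoC t - (E - 1))%C with (- ((cos (t * b), sin (t * b)) - 1 - Ci * RtoC (t * b)))%C.
    - rewrite Cmod_opp. apply eb.
    - unfold E. rewrite cexpI, RtoC_mult. ring. }
  assert (B3 : Cmod VK <= 1 * (t * t) / 2).
  { rewrite Cmod_norm.
    refine (norm_RInt_le (V:=C_R_NormedModule) _ (fun s => 1 * s) 0 t _ _ (Rlt_le _ _ Ht) _ HK (I_lin _ _)).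
    intros x Hx. rewrite <- Cmod_norm. rewrite Cmod_mult, cexpI, Cmod_E, Cmod_R.
    rewrite Rabs_pos_eq by lra. lra. }
  rewrite HR. eapply Rle_trans; [apply Cmod_triangle|].
  rewrite Cmod_mult, Cmod_mult, Cmod_R, Rabs_pos_eq by (left; apply Rinv_0_lt_compat; lra).
  replace (Rabs b ^ 2) with (b ^ 2) by (rewrite pow2_abs; reflexivity).
  assert (HM2 : / t * Cmod VK <= t / 2).
  { apply Rle_trans with (/ t * (1 * (t * t) / 2)).
    - apply Rmult_le_compat_l; [left; apply Rinv_0_lt_compat; lra | exact B3].
    - right; field; lra. }
  assert (HM0 : 0 <= / t * Cmod VK) by (apply Rmult_le_pos; [left; apply Rinv_0_lt_compat; lra | apply Cmod_ge_0]).
  assert (HP : Cmod (Ci * RtoC b * RtoC t - (E - 1))%C * (/ t * Cmod VK) <= 2 * (t * b) ^ 2 * (t / 2)).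
  { apply Rmult_le_compat; auto using Cmod_ge_0. }
  assert (0 <= t ^ 3 * b ^ 2) by (apply Rmult_le_pos; [apply pow_le; lra | apply pow2_ge_0]).
  assert (2 * (t * b) ^ 2 * (t / 2) = t ^ 3 * b ^ 2) by field.
  assert (2 * b ^ 2 * (t * t * t) / 3 = 2 / 3 * (t ^ 3 * b ^ 2)) by field.
  lra.
Qed.
Theorem lemma2p2 :
  (forall tau alpha beta : R, 0 < tau ->
     RInt (V := C_R_CompleteNormedModule) (integrand alpha beta tau) 0 tau
     = (RtoC tau * phi (Ci * RtoC (tau * alpha))
        - RtoC tau * (cexp (Ci * RtoC (tau * beta)) - 1)
            * psi (Ci * RtoC (tau * alpha)))%C)
  /\
  (exists C0 : R, forall tau alpha beta : R, 0 < tau ->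
     Cmod (R2 alpha beta tau) <= C0 * tau ^ 3 * Rabs beta ^ 2).
Proof.
  split; [exact part1 | exact part2].
Qed.
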